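(* For all integers $s\ge 1$ and $p\ge 0$ the following identities of formal series hold (empty sums are $0$): 1. $(2s-1)!\,\mathrm{I}_{2s}^{2p}(q)=\sum_{r=1}^{p}t(2s,2r)\mathrm{D}^{2r-1}A_{2p-2r+1}(q^2)+\sum_{r=p+1}^{s}t(2s,2r)\mathrm{D}^{2p}A_{2r-2p-1}(q^2)$; 2. $(2s)!\,\mathrm{I}_{2s+1}^{2p+1}(q)=\sum_{r=0}^{p}2^{-2r}t(2s+1,2r+1)\mathrm{D}^{2r}C_{2p-2r+1}(q)+\sum_{r=p+1}^{s}2^{-2r}t(2s+1,2r+1)\mathrm{D}^{2p+1}F_{2r-2p-1}(q)$; 3. $(2s-1)!(-1)^{s-1}\mathrm{II}_{2s}^{2p}(q)=\sum_{r=1}^{p}t(2s,2r)\mathrm{D}^{2r-1}L_{2p-2r+1}(q^2)+\sum_{r=p+1}^{s}t(2s,2r)\mathrm{D}^{2p}B_{2r-2p-1}(q^2)$; 4. $(2s)!(-1)^s\mathrm{II}_{2s+1}^{2p}(q)=\sum_{r=0}^{p-1}2^{-2r}t(2s+1,2r+1)\mathrm{D}^{2r}N_{2p-2r}(q)+\sum_{r=p}^{s}2^{-2r}t(2s+1,2r+1)\mathrm{D}^{2p}G_{2r-2p}(q)$; 5. $(2s-1)!\,\mathrm{III}_{2s}^{2p}(q)=\sum_{r=1}^{p}t(2s,2r)\mathrm{D}^{2r-1}F_{2p-2r+1}(q)+\sum_{r=p+1}^{s}t(2s,2r)\mathrm{D}^{2p}C_{2r-2p-1}(q)$; 6. $(2s)!\,\mathrm{III}_{2s+1}^{2p+1}(q)=\sum_{r=0}^{p}t(2s+1,2r+1)\mathrm{D}^{2r}H_{2p-2r+1}(q)+\sum_{r=p+1}^{s}2^{2p+1-2r}t(2s+1,2r+1)\mathrm{D}^{2p+1}H_{2r-2p-1}(q)$;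 7. $(2s-1)!(-1)^{s-1}\mathrm{IV}_{2s}^{2p}(q)=\sum_{r=1}^{p}t(2s,2r)\mathrm{D}^{2r-1}Q_{2p-2r+1}(q)+\sum_{r=p+1}^{s}t(2s,2r)\mathrm{D}^{2p}D_{2r-2p-1}(q)$; 8. $(2s)!(-1)^s\mathrm{IV}_{2s+1}^{2p}(q)=\sum_{r=0}^{p-1}t(2s+1,2r+1)\mathrm{D}^{2r}T_{2p-2r}(q)+\sum_{r=p}^{s}2^{2p-2r}t(2s+1,2r+1)\mathrm{D}^{2p}J_{2r-2p}(q)$; 9. $(2s-1)!\,\mathrm{V}_{2s}^{2p}(q)=\sum_{r=1}^{p}t(2s,2r)\mathrm{D}^{2r-1}B_{2p-2r+1}(q^2)+\sum_{r=p+1}^{s}t(2s,2r)\mathrm{D}^{2p}L_{2r-2p-1}(q^2)$; 10. $(2s)!\,\mathrm{V}_{2s+1}^{2p+1}(q)=\sum_{r=0}^{p}2^{-2r}t(2s+1,2r+1)\mathrm{D}^{2r}D_{2p-2r+1}(q)+\sum_{r=p+1}^{s}2^{-2r}t(2s+1,2r+1)\mathrm{D}^{2p+1}Q_{2r-2p-1}(q)$; 11. $(2s-1)!(-1)^{s-1}\mathrm{VI}_{2s}^{2p}(q)=\sum_{r=1}^{p}t(2s,2r)\mathrm{D}^{2r-1}M_{2p-2r+1}(q^2)+\sum_{r=p+1}^{s}t(2s,2r)\mathrm{D}^{2p}M_{2r-2p-1}(q^2)$; 12. $(2s)!(-1)^s\mathrm{VI}_{2s+1}^{2p}(q)=\sum_{r=0}^{p-1}2^{-2r}t(2s+1,2r+1)\mathrm{D}^{2r}P_{2p-2r}(q)+\sum_{r=p}^{s}2^{-2r}t(2s+1,2r+1)\mathrm{D}^{2p}R_{2r-2p}(q)$;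 13. $(2s-1)!\,\mathrm{VII}_{2s}^{2p+1}(q)=\sum_{r=1}^{p}t(2s,2r)\mathrm{D}^{2r-1}G_{2p-2r+2}(q)+\sum_{r=p+1}^{s}t(2s,2r)\mathrm{D}^{2p+1}N_{2r-2p-2}(q)$; 14. $(2s)!\,\mathrm{VII}_{2s+1}^{2p}(q)=\sum_{r=0}^{p-1}t(2s+1,2r+1)\mathrm{D}^{2r}J_{2p-2r}(q)+\sum_{r=p}^{s}2^{2p-2r}t(2s+1,2r+1)\mathrm{D}^{2p}T_{2r-2p}(q)$; 15. $(2s-1)!(-1)^{s-1}\mathrm{VIII}_{2s}^{2p+1}(q)=\sum_{r=1}^{p}t(2s,2r)\mathrm{D}^{2r-1}R_{2p-2r+2}(q)+\sum_{r=p+1}^{s}t(2s,2r)\mathrm{D}^{2p+1}P_{2r-2p-2}(q)$; 16. $(2s)!(-1)^s\mathrm{VIII}_{2s+1}^{2p+1}(q)=\sum_{r=0}^{p}t(2s+1,2r+1)\mathrm{D}^{2r}U_{2p-2r+1}(q)+\sum_{r=p+1}^{s}2^{2p-2r+1}t(2s+1,2r+1)\mathrm{D}^{2p+1}U_{2r-2p-1}(q)$.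
   Context: All series are formal series in $q^{1/2}$ (equivalently convergent for $0<|q|<1$ with a fixed choice of $q^{1/2}$). For integers $s\ge1$, $p\ge0$ (sums over $n\ge1$): $\mathrm{I}_s^p=\sum\frac{n^pq^{ns}}{(1-q^{2n})^s}$, $\mathrm{II}_s^p=\sum\frac{n^pq^{ns}}{(1+q^{2n})^s}$, $\mathrm{III}_s^p=\sum\frac{(2n-1)^pq^{(n-\frac12)s}}{(1-q^{2n-1})^s}$, $\mathrm{IV}_s^p=\sum\frac{(2n-1)^pq^{(n-\frac12)s}}{(1+q^{2n-1})^s}$, $\mathrm{V}_s^p=\sum\frac{(-1)^{n-1}n^pq^{ns}}{(1-q^{2n})^s}$, $\mathrm{VI}_s^p=\sum\frac{(-1)^{n-1}n^pq^{ns}}{(1+q^{2n})^s}$, $\mathrm{VII}_s^p=\sum\frac{(-1)^{n-1}(2n-1)^pq^{(n-\frac12)s}}{(1-q^{2n-1})^s}$, $\mathrm{VIII}_s^p=\sum\frac{(-1)^{n-1}(2n-1)^pq^{(n-\frac12)s}}{(1+q^{2n-1})^s}$. For integers $s\ge0$ (sums over $n\ge1$): $A_s=\sum\frac{n^sq^n}{1-q^n}$, $B_s=\sum\frac{(-1)^{n-1}n^sq^n}{1-q^n}$, $C_s=\sum\frac{n^sq^n}{1-q^{2n}}$, $D_s=\sum\frac{(-1)^{n-1}n^sq^n}{1-q^{2n}}$, $F_s=\sum\frac{(2n-1)^sq^{2n-1}}{1-q^{2n-1}}$, $G_s=\sum\frac{(-1)^{n-1}(2n-1)^sq^{2n-1}}{1-q^{2n-1}}$,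 $H_s=\sum\frac{(2n-1)^sq^{n-1/2}}{1-q^{2n-1}}$, $J_s=\sum\frac{(-1)^{n-1}(2n-1)^sq^{n-1/2}}{1-q^{2n-1}}$, $L_s=\sum\frac{n^sq^n}{1+q^n}$, $M_s=\sum\frac{(-1)^{n-1}n^sq^n}{1+q^n}$, $N_s=\sum\frac{n^sq^n}{1+q^{2n}}$, $P_s=\sum\frac{(-1)^{n-1}n^sq^n}{1+q^{2n}}$, $Q_s=\sum\frac{(2n-1)^sq^{2n-1}}{1+q^{2n-1}}$, $R_s=\sum\frac{(-1)^{n-1}(2n-1)^sq^{2n-1}}{1+q^{2n-1}}$, $T_s=\sum\frac{(2n-1)^sq^{n-1/2}}{1+q^{2n-1}}$, $U_s=\sum\frac{(-1)^{n-1}(2n-1)^sq^{n-1/2}}{1+q^{2n-1}}$. Central factorial numbers: for $n\ge1$, $x^2\prod_{k=1}^{n-1}(x^2-k^2)=\sum_{k=1}^n t(2n,2k)x^{2k}$; for $n\ge0$, $x\prod_{k=1}^n(x^2-\frac{(2k-1)^2}{4})=\sum_{k=0}^n t(2n+1,2k+1)x^{2k+1}$. The operator $\mathrm{D}$ acts on series $\sum_{\alpha\in\frac12\mathbb{Z}}a_\alpha q^\alpha$ by $\mathrm{D}\sum a_\alpha q^\alpha=\sum\alpha a_\alpha q^\alpha$ (i.e. $q\,d/dq$); $\mathrm{D}^0$ is the identity, and $\mathrm{D}^jF(q^2)$ denotes the series $\mathrm{D}^jF$ with $q$ replaced by $q^2$. *)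

(* Defs.v *)
From HB Require Import structures.
From mathcomp Require Import all_boot all_order all_algebra.
Set Implicit Arguments. Unset Strict Implicit. Unset Printing Implicit Defensive.
Import Order.TTheory GRing.Theory Num.Theory.
Local Open Scope ring_scope.

(* A formal series sum_{m>=0} f m * q^{m/2}; [f m] is the coefficient of q^{m/2}.
   (All series of the paper only involve nonnegative half-integer exponents.) *)
Definition fps := nat -> rat.

Definition fone : fps := fun m => (m == 0%N)%:R.
Definition fmono (c : rat) (a : nat) : fps := fun m => if m == a then c else 0.
Definition fmul (f g : fps) : fps := fun m => \sum_(i < m.+1) f i * g (m - i)%N.
Definition fpow (f : fps) (k : nat) : fps := iter k (fmul f) fone.
(* 1/(1 - g) = sum_k g^k, for g with zero constant term *)
Definition fgeom (g : fps) : fps := fun m => \sum_(k < m.+1) fpow g k m.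
(* sum_{n>=1} F n, for families where F n has no term below q^{n/2}
   (true for every family used below), so the coefficient of q^{m/2}
   only receives contributions from n <= m. *)
Definition fsumn (F : nat -> fps) : fps := fun m => \sum_(1 <= n < m.+2) F n m.
(* the operator D = q d/dq : q^{m/2} |-> (m/2) q^{m/2} *)
Definition fD (f : fps) : fps := fun m => (m%:R / 2) * f m.
Definition fDn (j : nat) (f : fps) : fps := iter j fD f.
(* substitution q -> q^2 : q^{m/2} |-> q^m *)
Definition fsq (f : fps) : fps := fun m => if odd m then 0 else f m./2.

(* sum_{n>=1} c(n) q^{a(n)/2} / (1 - eps q^{b(n)/2})^s *)
Definition lambert (c : nat -> rat) (a b : nat -> nat) (eps : rat) (s : nat) : fps :=
  fsumn (fun n => fmul (fmono (c n) (a n)) (fpow (fgeom (fmono eps (b n))) s)).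

Definition sgn (n : nat) : rat := (-1) ^+ n.-1.
Definition odn (n : nat) : nat := (2 * n).-1.

(* Roman-numeral series  (s = power of the denominator, p = power of n) *)
Definition serI (s p : nat) := lambert (fun n => n%:R ^+ p) (fun n => 2 * n * s)%N (fun n => 4 * n)%N 1 s.
Definition serII (s p : nat) := lambert (fun n => n%:R ^+ p) (fun n => 2 * n * s)%N (fun n => 4 * n)%N (-1) s.
Definition serIII (s p : nat) := lambert (fun n => (odn n)%:R ^+ p) (fun n => odn n * s)%N (fun n => 2 * odn n)%N 1 s.
Definition serIV (s p : nat) := lambert (fun n => (odn n)%:R ^+ p) (fun n => odn n * s)%N (fun n => 2 * odn n)%N (-1) s.
Definition serV (s p : nat) := lambert (fun n => sgn n * n%:R ^+ p) (fun n => 2 * n * s)%N (fun n => 4 * n)%N 1 s.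
Definition serVI (s p : nat) := lambert (fun n => sgn n * n%:R ^+ p) (fun n => 2 * n * s)%N (fun n => 4 * n)%N (-1) s.
Definition serVII (s p : nat) := lambert (fun n => sgn n * (odn n)%:R ^+ p) (fun n => odn n * s)%N (fun n => 2 * odn n)%N 1 s.
Definition serVIII (s p : nat) := lambert (fun n => sgn n * (odn n)%:R ^+ p) (fun n => odn n * s)%N (fun n => 2 * odn n)%N (-1) s.

Definition serA (s : nat) := lambert (fun n => n%:R ^+ s) (fun n => 2 * n)%N (fun n => 2 * n)%N 1 1.
Definition serB (s : nat) := lambert (fun n => sgn n * n%:R ^+ s) (fun n => 2 * n)%N (fun n => 2 * n)%N 1 1.
Definition serC (s : nat) := lambert (fun n => n%:R ^+ s) (fun n => 2 * n)%N (fun n => 4 * n)%N 1 1.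
Definition serD (s : nat) := lambert (fun n => sgn n * n%:R ^+ s) (fun n => 2 * n)%N (fun n => 4 * n)%N 1 1.
Definition serF (s : nat) := lambert (fun n => (odn n)%:R ^+ s) (fun n => 2 * odn n)%N (fun n => 2 * odn n)%N 1 1.
Definition serG (s : nat) := lambert (fun n => sgn n * (odn n)%:R ^+ s) (fun n => 2 * odn n)%N (fun n => 2 * odn n)%N 1 1.
Definition serH (s : nat) := lambert (fun n => (odn n)%:R ^+ s) (fun n => odn n)%N (fun n => 2 * odn n)%N 1 1.
Definition serJ (s : nat) := lambert (fun n => sgn n * (odn n)%:R ^+ s) (fun n => odn n)%N (fun n => 2 * odn n)%N 1 1.
Definition serL (s : nat) := lambert (fun n => n%:R ^+ s) (fun n => 2 * n)%N (fun n => 2 * n)%N (-1) 1.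
Definition serM (s : nat) := lambert (fun n => sgn n * n%:R ^+ s) (fun n => 2 * n)%N (fun n => 2 * n)%N (-1) 1.
Definition serN (s : nat) := lambert (fun n => n%:R ^+ s) (fun n => 2 * n)%N (fun n => 4 * n)%N (-1) 1.
Definition serP (s : nat) := lambert (fun n => sgn n * n%:R ^+ s) (fun n => 2 * n)%N (fun n => 4 * n)%N (-1) 1.
Definition serQ (s : nat) := lambert (fun n => (odn n)%:R ^+ s) (fun n => 2 * odn n)%N (fun n => 2 * odn n)%N (-1) 1.
Definition serR (s : nat) := lambert (fun n => sgn n * (odn n)%:R ^+ s) (fun n => 2 * odn n)%N (fun n => 2 * odn n)%N (-1) 1.
Definition serT (s : nat) := lambert (fun n => (odn n)%:R ^+ s) (fun n => odn n)%N (fun n => 2 * odn n)%N (-1) 1.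
Definition serU (s : nat) := lambert (fun n => sgn n * (odn n)%:R ^+ s) (fun n => odn n)%N (fun n => 2 * odn n)%N (-1) 1.

(* central factorial numbers:
   tce n k = t(2n,2k):  x^2 prod_{j=1}^{n-1} (x^2 - j^2) = sum_k t(2n,2k) x^{2k}
   tco n k = t(2n+1,2k+1): x prod_{j=1}^{n} (x^2 - (2j-1)^2/4) = sum_k t(2n+1,2k+1) x^{2k+1} *)
Definition tce (n k : nat) : rat :=
  (('X : {poly rat}) ^+ 2 * \prod_(1 <= j < n) ('X ^+ 2 - (j%:R ^+ 2)%:P)) `_ (2 * k).
Definition tco (n k : nat) : rat :=
  (('X : {poly rat}) * \prod_(1 <= j < n.+1) ('X ^+ 2 - ((odn j)%:R ^+ 2 / 4)%:P)) `_ (2 * k).+1.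

(* Main.v *)
Require Import Defs.
From HB Require Import structures.
From mathcomp Require Import all_boot all_order all_algebra.
From mathcomp Require Import ring lra zify.
Import Order.TTheory GRing.Theory Num.Theory.
Local Open Scope ring_scope.

Lemma sum_single (a N j0 : nat) (F : nat -> rat) :
  \sum_(a <= j < N) (if j == j0 then F j else 0) =
  if ((a <= j0) && (j0 < N))%N then F j0 else 0.
Proof.
elim: N => [|N IH]; first by rewrite big_geq // andbF.
case: (leqP a N) => haN.
- rewrite big_nat_recr //= IH.
  case: (eqVneq N j0) => [<-|hne].
  + by rewrite ltnn andbF add0r haN ltnSn.
  + rewrite addr0; congr (if _ then _ else _).
    rewrite eq_sym in hne.
    apply/andP/andP => -[h1 h2]; split => //; move: hne h2; case: eqP => // ? _; lia.
- rewrite big_geq //; case: ifP => //; lia.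
Qed.

Lemma fmul_mono (c : rat) (a : nat) (g : fps) (t : nat) :
  fmul (fmono c a) g t = if (a <= t)%N then c * g (t - a)%N else 0.
Proof.
rewrite /fmul /fmono.
rewrite (eq_bigr (fun i : 'I_t.+1 => if nat_of_ord i == a then c * g (t - a)%N else 0)); last first.
  by move=> i _; case: eqP => [->|]; rewrite ?mul0r.
rewrite -(big_mkord xpredT (fun i => if i == a then c * g (t - a)%N else 0)).
rewrite sum_single; congr (if _ then _ else _).
Qed.

Lemma fmul1r (f : fps) t : fmul f fone t = f t.
Proof.
rewrite /fmul /fone.
rewrite (eq_bigr (fun i : 'I_t.+1 => if nat_of_ord i == t then f t else 0)); last first.
  move=> i _; case: (eqVneq (nat_of_ord i) t) => [->|hne]; first by rewrite subnn mulr1.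
  have -> : (t - i == 0)%N = false by have := ltn_ord i; move: hne; case: eqP => // ? _; lia.
  by rewrite mulr0.
rewrite -(big_mkord xpredT (fun i => if i == t then f t else 0)).
by rewrite sum_single ltnSn.
Qed.

Lemma fpow_mono (c : rat) (b k t : nat) :
  fpow (fmono c b) k t = fmono (c ^+ k) (k * b) t.
Proof.
elim: k t => [|k IH] t.
  by rewrite /fpow /= /fone /fmono mul0n expr0; case: (t == 0%N).
rewrite /fpow iterS -/(fpow (fmono c b) k) fmul_mono IH /fmono.
case: leqP => h.
- have -> : ((t - b == k * b) = (t == k.+1 * b))%N by rewrite mulSn; apply/eqP/eqP; lia.
  by case: (t == k.+1 * b)%N; rewrite ?exprS ?mulr0.
- case: eqP => //; rewrite mulSn; lia.
Qed.

Lemma eqmul (t k b : nat) : (0 < b)%N -> (t == k * b)%N = (b %| t)%N && (k == t %/ b)%N.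
Proof.
move=> hb; apply/eqP/andP => [->|[/dvdnP [q ->] /eqP ->]]; last by rewrite mulnK.
by rewrite dvdn_mull // mulnK.
Qed.

Lemma fgeom_mono (eps : rat) (b t : nat) : (0 < b)%N ->
  fgeom (fmono eps b) t = if (b %| t)%N then eps ^+ (t %/ b) else 0.
Proof.
move=> hb; rewrite /fgeom.
rewrite (eq_bigr (fun k : 'I_t.+1 => if (b %| t)%N then
   (if nat_of_ord k == (t %/ b)%N then eps ^+ (t %/ b) else 0) else 0)); last first.
  move=> k _; rewrite fpow_mono /fmono eqmul //.
  by case: (b %| t)%N => //=; case: eqP => // ->.
case: (b %| t)%N; last by rewrite big1.
rewrite -(big_mkord xpredT (fun k => if k == (t %/ b)%N then eps ^+ (t %/ b) else 0)).
rewrite sum_single /= ltnS leq_div //.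
Qed.

Definition prq (S : nat) (x : rat) : rat := \prod_(1 <= i < S) (x + i%:R).

Lemma prq_recr S x : (0 < S)%N -> prq S.+1 x = prq S x * (x + S%:R).
Proof. by move=> hS; rewrite /prq big_nat_recr. Qed.

Lemma prq_recl S x : (0 < S)%N -> prq S.+1 x = (x + 1) * prq S (x + 1).
Proof.
move=> hS; rewrite /prq big_nat_recl //; congr (_ * _).
by apply: eq_big_nat => i _; rewrite -addn1 natrD addrA (addrC _ 1) addrA (addrC 1).
Qed.

Lemma prq1 x : prq 1 x = 1.
Proof. by rewrite /prq big_geq. Qed.

Lemma hockey S T : (0 < S)%N ->
  \sum_(k < T.+1) prq S k%:R = prq S.+1 T%:R / S%:R.
Proof.
move=> hS; have hS0 : (S%:R : rat) != 0 by rewrite pnatr_eq0 -lt0n.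
elim: T => [|T IH].
  by rewrite big_ord1 prq_recr //= add0r mulfK.
rewrite big_ord_recr /= IH prq_recl // prq_recr //.
have -> : (T.+1)%:R = T%:R + 1 :> rat by rewrite -natr1.
by field.
Qed.

Lemma sum_mult (b T : nat) (f : nat -> rat) : (0 < b)%N ->
  (forall i, ~~ (b %| i)%N -> f i = 0) ->
  \sum_(0 <= i < (T * b).+1) f i = \sum_(0 <= I < T.+1) f (I * b)%N.
Proof.
move=> hb hf; elim: T => [|T IH]; first by rewrite mul0n !big_nat1.
rewrite (big_cat_nat _ (n := (T * b).+1)) //=; last by rewrite ltnS mulSn; lia.
rewrite IH [in RHS]big_nat_recr //=; congr (_ + _).
have -> : ((T.+1 * b).+1 = (T * b + b).+1)%N by rewrite mulSn addnC.
rewrite big_nat_recr /=; last by lia.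
rewrite big_nat_cond big1 ?add0r; first by rewrite mulSn addnC.
move=> i /andP [/andP [h1 h2] _]; apply: hf; apply/negP => /dvdnP [q hq].
move: h1 h2; rewrite hq => h1 h2.
have h3 : (T < q)%N by rewrite -(ltn_pmul2r hb); lia.
have h4 : (q < T.+1)%N by rewrite -(ltn_pmul2r hb) mulSn; lia.
lia.
Qed.

Definition Hs (S : nat) (eps : rat) (b t : nat) : rat :=
  if (b %| t)%N then eps ^+ (t %/ b) * (prq S (t %/ b)%:R / (S.-1)`!%:R) else 0.

Lemma conv S eps b t : (0 < b)%N -> (0 < S)%N ->
  \sum_(i < t.+1) (if (b %| i)%N then eps ^+ (i %/ b) else 0) * Hs S eps b (t - i) =
  Hs S.+1 eps b t.
Proof.
move=> hb hS.
rewrite -(big_mkord xpredT (fun i => (if (b %| i)%N then eps ^+ (i %/ b) else 0) * Hs S eps b (t - i))).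
rewrite {2}/Hs; case: ifP => hdt; last first.
  rewrite big_nat_cond big1 // => i /andP [/andP [_ hit] _]; rewrite /Hs.
  case: ifP => hi; last by rewrite mul0r.
  case: ifP => hti; last by rewrite mulr0.
  by move: hdt; rewrite -(subnKC (hit : (i <= t)%N)) dvdn_add.
move: hdt => /dvdnP [T ->].
rewrite sum_mult //; last first.
  by move=> i /negbTE hi; rewrite hi mul0r.
rewrite mulnK //.
rewrite big_nat_cond (eq_bigr (fun I => eps ^+ T * (prq S (T - I)%N%:R / (S.-1)`!%:R))); last first.
  move=> I /andP [/andP [_ hI] _].
  rewrite dvdn_mull // mulnK // -mulnBl /Hs dvdn_mull // mulnK // mulrA -exprD subnKC //.
rewrite -big_nat_cond -mulr_sumr; congr (_ * _).
rewrite -mulr_suml big_nat_rev /=.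
rewrite (eq_big_nat _ _ (F2 := fun i => prq S i%:R)); last first.
  by move=> i hi; congr (prq S _%:R); lia.
rewrite big_mkord hockey //.
case: S hS => // S' _ /=; rewrite factS natrM.
by rewrite invfM mulrA.
Qed.

Lemma fpow_geo S eps b t : (0 < b)%N -> (0 < S)%N ->
  fpow (fgeom (fmono eps b)) S t = Hs S eps b t.
Proof.
move=> hb; case: S => // S _; elim: S t => [|S IH] t.
  rewrite /fpow /= fmul1r fgeom_mono // /Hs.
  by case: ifP => //; rewrite prq1 fact0 mulr1n divr1 ?mulr1.
rewrite /fpow iterS -/(fpow _ S.+1) /fmul.
rewrite (eq_bigr (fun i : 'I_t.+1 => (if (b %| i)%N then eps ^+ (i %/ b) else 0) * Hs S.+1 eps b (t - i))).
  by rewrite conv.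
by move=> i _; rewrite fgeom_mono // IH.
Qed.

Definition D2 (w : nat -> nat -> rat) (e : nat -> nat -> nat) : fps :=
  fun m => \sum_(1 <= n < m.+2) \sum_(1 <= j < m.+2) (if e n j == m then w n j else 0).

Definition bnd (e : nat -> nat -> nat) := forall n j, (0 < n)%N -> (0 < j)%N ->
  (n <= (e n j).+1)%N /\ (j <= (e n j).+1)%N.

Lemma D2_wide w e m N K : bnd e -> (m.+2 <= N)%N -> (m.+2 <= K)%N ->
  \sum_(1 <= n < N) \sum_(1 <= j < K) (if e n j == m then w n j else 0) = D2 w e m.
Proof.
move=> hb hN hK; rewrite /D2 (big_cat_nat _ (n := m.+2)) //= [X in _ + X]big_nat_cond [X in _ + X]big1 ?addr0.
  apply: eq_big_nat => n /andP [hn _].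
  rewrite (big_cat_nat _ (n := m.+2)) //= [X in _ + X]big_nat_cond [X in _ + X]big1 ?addr0 //.
  move=> j /andP [/andP [h1 h2] _]; case: eqP => // He.
  by have := hb n j hn (leq_trans (isT : (0 < m.+2)%N) h1); lia.
move=> n /andP [/andP [h1 h2] _]; rewrite big_nat_cond big1 // => j /andP [/andP [j1 j2] _].
case: eqP => // He.
by have := hb n j (leq_trans (isT : (0 < m.+2)%N) h1) j1; lia.
Qed.

Lemma D2_ext w w' e e' m :
  (forall n j, (0 < n)%N -> (0 < j)%N -> e n j = e' n j) ->
  (forall n j, (0 < n)%N -> (0 < j)%N -> w n j = w' n j) -> D2 w e m = D2 w' e' m.
Proof.
move=> he hw; apply: eq_big_nat => n /andP [hn _]; apply: eq_big_nat => j /andP [hj _].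
by rewrite he // hw.
Qed.

Lemma D2_swap w e m : D2 w e m = D2 (fun n j => w j n) (fun n j => e j n) m.
Proof. by rewrite /D2 exchange_big_nat. Qed.

Lemma D2_scale k w e m : k * D2 w e m = D2 (fun n j => k * w n j) e m.
Proof.
rewrite /D2 mulr_sumr; apply: eq_bigr => n _; rewrite mulr_sumr; apply: eq_bigr => j _.
by case: ifP; rewrite ?mulr0.
Qed.

Lemma D2_sum (a b : nat) (F : nat -> nat -> nat -> rat) e m :
  D2 (fun n j => \sum_(a <= r < b) F r n j) e m = \sum_(a <= r < b) D2 (F r) e m.
Proof.
rewrite /D2 [RHS]exchange_big_nat; apply: eq_bigr => n _; rewrite [RHS]exchange_big_nat.
apply: eq_bigr => j _; case: ifP => // _; by rewrite big1.
Qed.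

Lemma D2_add w1 w2 e m : D2 (fun n j => w1 n j + w2 n j) e m = D2 w1 e m + D2 w2 e m.
Proof.
rewrite /D2 -big_split; apply: eq_bigr => n _; rewrite -big_split; apply: eq_bigr => j _.
by case: ifP; rewrite ?addr0.
Qed.

Lemma fDnE d f m : fDn d f m = (m%:R / 2) ^+ d * f m.
Proof.
elim: d => [|d IH]; first by rewrite expr0 mul1r.
by rewrite /fDn iterS -/(fDn d f) /fD IH mulrA -exprS.
Qed.

Lemma fDn_D2 d w e m : fDn d (D2 w e) m = D2 (fun n j => ((e n j)%:R / 2) ^+ d * w n j) e m.
Proof.
rewrite fDnE /D2 mulr_sumr; apply: eq_bigr => n _; rewrite mulr_sumr; apply: eq_bigr => j _.
by case: eqP => [->|]; rewrite ?mulr0.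
Qed.

Lemma fsq_D2 w e m : bnd e -> fsq (D2 w e) m = D2 w (fun n j => 2 * e n j)%N m.
Proof.
move=> hb; rewrite /fsq; case: ifP => hm.
  rewrite /D2 big1 // => n _; rewrite big1 // => j _.
  by case: eqP => // he; move: hm; rewrite -he oddM.
have hm2 : m = (2 * m./2)%N by rewrite -{1}(odd_double_half m) hm add0n -mul2n.
rewrite -(D2_wide w e m./2 m.+2 m.+2) //; try lia.
rewrite /D2; apply: eq_bigr => n _; apply: eq_bigr => j _.
by rewrite {2}hm2 eqn_pmul2l.
Qed.

Lemma D2_shift (d : nat) w w' e e' m : bnd e' ->
  (forall n j, (0 < n)%N -> (0 < j)%N -> e n j = e' n (j + d)%N /\ w n j = w' n (j + d)%N) ->
  (forall n j, (0 < n)%N -> (0 < j)%N -> (j <= d)%N -> w' n j = 0) ->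
  D2 w e m = D2 w' e' m.
Proof.
move=> hb hew hz.
rewrite -(D2_wide w' e' m m.+2 (m.+2 + d)%N) //; last lia.
rewrite /D2; apply: eq_big_nat => n /andP [hn _].
rewrite (eq_big_nat _ _ (F2 := fun j => if e' n (j + d)%N == m then w' n (j + d)%N else 0)); last first.
  by move=> j /andP [hj _]; have [-> ->] := hew n j hn hj.
rewrite [RHS](big_cat_nat _ (n := (1 + d)%N)) //=; try lia.
rewrite [X in _ = X + _]big_nat_cond [X in _ = X + _]big1 ?add0r; last first.
  by move=> j /andP [/andP [h1 h2] _]; rewrite hz ?if_same //; lia.
by rewrite [RHS]big_addn addnK.
Qed.

Lemma lam_D2 c a b eps S m : (0 < S)%N ->
  (forall n, (0 < n)%N -> (n <= a n)%N) -> (forall n, (0 < n)%N -> (0 < b n)%N) ->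
  lambert c a b eps S m =
  D2 (fun n j => c n * (eps ^+ j.-1 * (prq S (j.-1)%:R / (S.-1)`!%:R)))
     (fun n j => a n + j.-1 * b n)%N m.
Proof.
move=> hS ha hb; rewrite /lambert /fsumn /D2; apply: eq_big_nat => n /andP [hn _].
rewrite fmul_mono fpow_geo ?hb //.
set W := fun j => c n * (eps ^+ j.-1 * (prq S (j.-1)%:R / (S.-1)`!%:R)).
rewrite (eq_big_nat _ _ (F2 := fun j => if ((a n <= m) && (b n %| m - a n))%N
   then (if j == ((m - a n) %/ b n).+1 then W j else 0) else 0)); last first.
  move=> j /andP [hj _].
  have -> : (a n + j.-1 * b n == m)%N =
      ((a n <= m) && (b n %| m - a n))%N && (j == ((m - a n) %/ b n).+1).
    case: (leqP (a n) m) => ham /=; last by apply/negbTE/eqP; nia.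
    rewrite (_ : (a n + j.-1 * b n == m) = (m - a n == j.-1 * b n))%N; last by apply/eqP/eqP; lia.
    rewrite eqmul ?hb //; congr (_ && _); apply/eqP/eqP; lia.
  by rewrite /W; case: ((a n <= m) && _)%N.
rewrite /Hs; case: (leqP (a n) m) => ham /=; last by rewrite big1.
case: ifP => hd; last by rewrite big1 ?mulr0.
rewrite sum_single /= !ltnS (leq_trans (leq_div _ _) (leq_subr _ _)) /W //.
Qed.

Lemma lam1_D2 c a b eps m :
  (forall n, (0 < n)%N -> (n <= a n)%N) -> (forall n, (0 < n)%N -> (0 < b n)%N) ->
  lambert c a b eps 1 m = D2 (fun n j => c n * eps ^+ j.-1) (fun n j => a n + j.-1 * b n)%N m.
Proof.
move=> ha hb; rewrite lam_D2 //; apply: D2_ext => // n j _ _.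
by rewrite prq1 fact0 mulr1n divr1 ?mulr1.
Qed.

Lemma prq_zero S k : (0 < k)%N -> (k < S)%N -> prq S (- k%:R) = 0.
Proof.
move=> h1 h2; rewrite /prq (big_cat_nat _ (n := k)) //; last lia.
rewrite (big_ltn h2) /=.
by rewrite addNr mul0r mulr0.
Qed.

Lemma Ev_prod s y : (0 < s)%N ->
  prq (2 * s) (y - s%:R) = y * \prod_(1 <= j < s) (y ^+ 2 - j%:R ^+ 2).
Proof.
case: s => // s _; elim: s => [|s IH].
  by rewrite /prq big_nat1 big_geq // mulr1 subrK.
rewrite (_ : (2 * s.+2 = (2 * s.+1).+2)%N); last lia.
rewrite prq_recl; last lia.
rewrite prq_recr; last lia.
rewrite (_ : y - s.+2%:R + 1 = y - s.+1%:R); last by rewrite -(natr1 s.+1); ring.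
rewrite IH [X in _ = _ * X]big_nat_recr //=.
rewrite natrM; ring.
Qed.

Lemma Od_prod s y :
  prq (2 * s).+1 (y - s%:R - 1 / 2) = \prod_(1 <= j < s.+1) (y ^+ 2 - (odn j)%:R ^+ 2 / 4).
Proof.
elim: s => [|s IH]; first by rewrite prq1 big_geq.
rewrite (_ : ((2 * s.+1).+1 = (2 * s).+3)%N); last lia.
rewrite prq_recl // prq_recr //.
rewrite (_ : y - s.+1%:R - 1 / 2 + 1 = y - s%:R - 1 / 2); last by rewrite -(natr1 s); field.
rewrite IH [RHS]big_nat_recr //= (_ : odn s.+1 = (2 * s).+1); last by rewrite /odn; lia.
by rewrite -(natr1 (2 * s)) natrM; field.
Qed.

Lemma polyX_coef (e K : nat) (c : nat -> rat) :
  let P := ('X ^+ e * \prod_(1 <= j < K.+1) ('X ^+ 2 - (c j)%:P) : {poly rat}) in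
  (forall i, odd i != odd e -> P`_i = 0) /\ (forall i, (e + 2 * K < i)%N -> P`_i = 0).
Proof.
elim: K => [|K [IH1 IH2]] /=.
  rewrite big_geq // mulr1; split => i hi; rewrite coefXn; case: eqP => // hie; move: hi; rewrite hie.
    by rewrite eqxx.
  by lia.
rewrite big_nat_recr //= mulrA.
set P := 'X ^+ e * _ in IH1 IH2 *.
split => i hi; rewrite mulrBr coefB coefMC (mulrC P) coefXnM.
  rewrite (IH1 i) // mul0r subr0; case: ifP => // hi2; apply: IH1; lia.
rewrite (IH2 i) ?mul0r ?subr0; last lia.
case: ifP => // hi2; apply: IH2; lia.
Qed.

Lemma sum_evod (N : nat) (f : nat -> rat) :
  \sum_(0 <= i < 2 * N) f i = \sum_(0 <= k < N) (f (2 * k)%N + f (2 * k).+1).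
Proof.
elim: N => [|N IH]; first by rewrite !big_geq.
rewrite (_ : (2 * N.+1 = (2 * N).+2)%N); last lia.
by rewrite big_nat_recr //= big_nat_recr //= IH big_nat_recr //= addrA.
Qed.

Lemma tce_big s r : (0 < s)%N -> (s < r)%N -> tce s r = 0.
Proof.
case: s => // s _ hr; rewrite /tce.
have [_ H] := polyX_coef 2 s (fun j => j%:R ^+ 2).
by apply: H; lia.
Qed.

Lemma tco_big s r : (s < r)%N -> tco s r = 0.
Proof.
move=> hr; rewrite /tco.
have [_ H] := polyX_coef 1 s (fun j => (odn j)%:R ^+ 2 / 4).
by apply: H; lia.
Qed.

Lemma tce_eval s y : (0 < s)%N -> y != 0 ->
  prq (2 * s) (y - s%:R) = \sum_(1 <= r < s.+1) tce s r * y ^+ (2 * r).-1.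
Proof.
case: s => // s _ hy.
set P := (('X : {poly rat}) ^+ 2 * \prod_(1 <= j < s.+1) ('X ^+ 2 - (j%:R ^+ 2)%:P)).
have hP : P.[y] = y * prq (2 * s.+1) (y - s.+1%:R).
  rewrite Ev_prod // /P hornerM hornerXn horner_prod mulrA -expr2; congr (_ * _).
  by apply: eq_bigr => j _; rewrite hornerD hornerN hornerXn hornerC.
have [hodd hbig] := polyX_coef 2 s (fun j => j%:R ^+ 2).
rewrite -/P in hodd hbig.
have hsz : (size P <= 2 * s.+2)%N by apply/leq_sizeP => i hi; apply: hbig; lia.
have := horner_coef_wide y hsz.
rewrite -(big_mkord xpredT (fun i => P`_i * y ^+ i)) sum_evod hP.
rewrite (eq_bigr (fun k => tce s.+1 k * y ^+ (2 * k))); last first.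
  by move=> k _; rewrite (hodd (2 * k).+1) ?mul0r ?addr0 //; lia.
rewrite big_ltn // (_ : tce s.+1 0 = 0) ?mul0r ?add0r; last by rewrite /tce coefXnM.
have -> : \sum_(1 <= i < s.+2) tce s.+1 i * y ^+ (2 * i) =
   y * \sum_(1 <= i < s.+2) tce s.+1 i * y ^+ (2 * i).-1.
  rewrite mulr_sumr; apply: eq_big_nat => i /andP [hi _].
  rewrite (_ : (2 * i = ((2 * i).-1).+1)%N); last lia.
  by rewrite exprS mulrCA.
move/(mulfI hy); exact.
Qed.

Lemma tco_eval s y : y != 0 ->
  prq (2 * s).+1 (y - s%:R - 1 / 2) = \sum_(0 <= r < s.+1) tco s r * y ^+ (2 * r).
Proof.
move=> hy.
set P := (('X : {poly rat}) * \prod_(1 <= j < s.+1) ('X ^+ 2 - ((odn j)%:R ^+ 2 / 4)%:P)).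
have hP : P.[y] = y * prq (2 * s).+1 (y - s%:R - 1 / 2).
  rewrite Od_prod // /P hornerM hornerX horner_prod; congr (_ * _).
  by apply: eq_bigr => j _; rewrite hornerD hornerN hornerXn hornerC.
have [hodd hbig] := polyX_coef 1 s (fun j => (odn j)%:R ^+ 2 / 4).
rewrite expr1 -/P in hodd hbig.
have hsz : (size P <= 2 * s.+1)%N by apply/leq_sizeP => i hi; apply: hbig; lia.
have := horner_coef_wide y hsz.
rewrite -(big_mkord xpredT (fun i => P`_i * y ^+ i)) sum_evod hP.
rewrite (eq_bigr (fun k => y * (tco s k * y ^+ (2 * k)))); last first.
  move=> k _; rewrite (hodd (2 * k)); last lia.
  by rewrite mul0r add0r exprS mulrCA /tco -/P.
rewrite -mulr_sumr; move/(mulfI hy); exact.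
Qed.

Lemma sum_split (a c0 s : nat) (F : nat -> rat) : (a <= c0)%N ->
  (forall r, (s < r)%N -> F r = 0) ->
  \sum_(a <= r < s.+1) F r = \sum_(a <= r < c0) F r + \sum_(c0 <= r < s.+1) F r.
Proof.
move=> hac hF; case: (leqP c0 s.+1) => h; first by rewrite -big_cat_nat.
rewrite [X in _ = _ + X]big_geq ?addr0; last lia.
case: (leqP a s.+1) => h2.
  rewrite [RHS](big_cat_nat _ (n := s.+1)) //=; last lia.
  rewrite [X in _ = _ + X]big_nat_cond [X in _ = _ + X]big1 ?addr0 //.
  by move=> r /andP [/andP [h3 h4] _]; apply: hF.
rewrite big_geq; last lia.
rewrite big_nat_cond big1 // => r /andP [/andP [h3 h4] _]; apply: hF; lia.
Qed.

Lemma lhs_even c eps g a b s m : (0 < s)%N ->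
  (forall n, a n = g n * (2 * s))%N -> (forall n, b n = 2 * g n)%N ->
  (forall n, (0 < n)%N -> (n <= g n)%N) ->
  ((2 * s).-1)`!%:R * eps ^+ s.-1 * lambert c a b eps (2 * s) m =
  D2 (fun n J => c n * eps ^+ J.-1 * prq (2 * s) (J%:R - s%:R)) (fun n J => 2 * g n * J)%N m.
Proof.
move=> hs ha hb hg.
have h1 : (0 < 2 * s)%N by lia.
have h2 : forall n, (0 < n)%N -> (n <= a n)%N by move=> n hn; rewrite ha; have := hg n hn; nia.
have h3 : forall n, (0 < n)%N -> (0 < b n)%N by move=> n hn; rewrite hb; have := hg n hn; lia.
rewrite lam_D2 //.
rewrite D2_scale; apply: (D2_shift s.-1).
- by move=> n j hn hj; have := hg n hn; split; nia.
- move=> n j hn hj; split; first by rewrite ha hb; nia.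
  case: j hj => // j _; clear h1 h2 h3; case: s hs {ha} => // s _.
  rewrite (_ : j.+1.-1 = j) // (_ : s.+1.-1 = s) // (_ : (j.+1 + s).-1 = (j + s)%N) //.
  rewrite (_ : (j.+1 + s)%:R - s.+1%:R = j%:R :> rat); last first.
    by rewrite -!natr1 natrD; ring.
  rewrite exprD.
  have hf : ((2 * s.+1).-1)`!%:R != 0 :> rat by rewrite pnatr_eq0 -lt0n fact_gt0.
  by field.
- move=> n j hn hj hjs.
  rewrite (_ : j%:R - s%:R = - (s - j)%N%:R :> rat); last by rewrite natrB ?opprB //; lia.
  by rewrite prq_zero ?mulr0 //; lia.
Qed.

Lemma lhs_odd c eps g a b s m :
  (forall n, a n = g n * (2 * s).+1)%N -> (forall n, b n = 2 * g n)%N ->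
  (forall n, (0 < n)%N -> (n <= g n)%N) ->
  (2 * s)`!%:R * eps ^+ s * lambert c a b eps (2 * s).+1 m =
  D2 (fun n J => c n * eps ^+ J.-1 * prq (2 * s).+1 ((odn J)%:R / 2 - s%:R - 1 / 2))
     (fun n J => g n * odn J)%N m.
Proof.
move=> ha hb hg.
have h2 : forall n, (0 < n)%N -> (n <= a n)%N by move=> n hn; rewrite ha; have := hg n hn; nia.
have h3 : forall n, (0 < n)%N -> (0 < b n)%N by move=> n hn; rewrite hb; have := hg n hn; lia.
rewrite lam_D2 //.
rewrite D2_scale; apply: (D2_shift s).
- by move=> n j hn hj; have := hg n hn; rewrite /odn; split; nia.
- move=> n j hn hj; split; first by rewrite ha hb /odn; nia.
  case: j hj => // j _.
  rewrite (_ : j.+1.-1 = j) // (_ : (j.+1 + s).-1 = (j + s)%N) //.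
  rewrite (_ : (odn (j.+1 + s))%:R / 2 - s%:R - 1 / 2 = j%:R :> rat); last first.
    rewrite (_ : odn (j.+1 + s) = (2 * (j + s)).+1); last by rewrite /odn; lia.
    by rewrite -natr1 natrM natrD; field.
  rewrite exprD.
  have hf : ((2 * s)`!)%:R != 0 :> rat by rewrite pnatr_eq0 -lt0n fact_gt0.
  by field.
- move=> n j hn hj hjs.
  rewrite (_ : (odn j)%:R / 2 - s%:R - 1 / 2 = - (s.+1 - j)%N%:R :> rat); last first.
    rewrite (_ : odn j = (2 * j.-1).+1); last by rewrite /odn; lia.
    rewrite natrB; last lia.
    rewrite -natr1 natrM -(natr1 s) (_ : j%:R = j.-1%:R + 1 :> rat); last by rewrite natr1 prednK.
    by field.
  by rewrite prq_zero ?mulr0 //; lia.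
Qed.

Lemma lhs_even_split c eps g a b s m c0 : (0 < s)%N -> (1 <= c0)%N ->
  (forall n, a n = g n * (2 * s))%N -> (forall n, b n = 2 * g n)%N ->
  (forall n, (0 < n)%N -> (n <= g n)%N) ->
  ((2 * s).-1)`!%:R * eps ^+ s.-1 * lambert c a b eps (2 * s) m =
  \sum_(1 <= r < c0) tce s r *
      D2 (fun n J => c n * eps ^+ J.-1 * J%:R ^+ (2 * r).-1) (fun n J => 2 * g n * J)%N m +
  \sum_(c0 <= r < s.+1) tce s r *
      D2 (fun n J => c n * eps ^+ J.-1 * J%:R ^+ (2 * r).-1) (fun n J => 2 * g n * J)%N m.
Proof.
move=> hs hc ha hb hg; rewrite (lhs_even _ _ g) //.
rewrite (D2_ext _ (fun n J => \sum_(1 <= r < s.+1)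
            tce s r * (c n * eps ^+ J.-1 * J%:R ^+ (2 * r).-1)) _ (fun n J => 2 * g n * J)%N) //; last first.
  move=> n J hn hJ; rewrite tce_eval //; last by rewrite pnatr_eq0 -lt0n.
  by rewrite mulr_sumr; apply: eq_bigr => r _; rewrite mulrCA.
rewrite D2_sum -sum_split //.
  by apply: eq_bigr => r _; rewrite D2_scale.
by move=> r hr; rewrite tce_big // mul0r.
Qed.

Lemma lhs_odd_split c eps g a b s m c0 :
  (forall n, a n = g n * (2 * s).+1)%N -> (forall n, b n = 2 * g n)%N ->
  (forall n, (0 < n)%N -> (n <= g n)%N) ->
  (2 * s)`!%:R * eps ^+ s * lambert c a b eps (2 * s).+1 m =
  \sum_(0 <= r < c0) tco s r *
      D2 (fun n J => c n * eps ^+ J.-1 * ((odn J)%:R / 2) ^+ (2 * r)) (fun n J => g n * odn J)%N m +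
  \sum_(c0 <= r < s.+1) tco s r *
      D2 (fun n J => c n * eps ^+ J.-1 * ((odn J)%:R / 2) ^+ (2 * r)) (fun n J => g n * odn J)%N m.
Proof.
move=> ha hb hg; rewrite (lhs_odd _ _ g) //.
rewrite (D2_ext _ (fun n J => \sum_(0 <= r < s.+1)
            tco s r * (c n * eps ^+ J.-1 * ((odn J)%:R / 2) ^+ (2 * r))) _ (fun n J => g n * odn J)%N) //; last first.
  move=> n J hn hJ; rewrite tco_eval //; last first.
    by rewrite mulf_neq0 // ?invr_eq0 // pnatr_eq0 /odn; lia.
  by rewrite mulr_sumr; apply: eq_bigr => r _; rewrite mulrCA.
rewrite D2_sum -sum_split //.
  by apply: eq_bigr => r _; rewrite D2_scale.
by move=> r hr; rewrite tco_big // mul0r.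
Qed.

Lemma lamX c a b eps E m :
  (forall n, (0 < n)%N -> (n <= a n)%N) -> (forall n, (0 < n)%N -> (0 < b n)%N) ->
  (forall n j, (0 < n)%N -> (0 < j)%N -> (a n + j.-1 * b n)%N = E n j) ->
  lambert c a b eps 1 m = D2 (fun n j => c n * eps ^+ j.-1) E m.
Proof. by move=> ha hb hE; rewrite lam1_D2 //; apply: D2_ext. Qed.

Lemma cls1 d c eps m :
  fDn d (lambert c (fun n => 2 * n)%N (fun n => 2 * n)%N eps 1) m =
  D2 (fun n j => (n%:R * j%:R) ^+ d * (c n * eps ^+ j.-1)) (fun n j => 2 * n * j)%N m.
Proof.
rewrite fDnE (lamX _ _ _ _ (fun n j => 2 * n * j)%N); try (move=> *; nia).
rewrite -fDnE fDn_D2; apply: D2_ext => // n j _ _; congr (_ ^+ _ * _).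
by rewrite !natrM; field.
Qed.

Lemma fsq_ext f g m : (forall k, f k = g k) -> fsq f m = fsq g m.
Proof. by move=> h; rewrite /fsq h. Qed.

Lemma cls1sq d c eps m :
  fsq (fDn d (lambert c (fun n => 2 * n)%N (fun n => 2 * n)%N eps 1)) m =
  D2 (fun n j => (n%:R * j%:R) ^+ d * (c n * eps ^+ j.-1)) (fun n j => 2 * (2 * n * j))%N m.
Proof.
rewrite (fsq_ext _ _ m (cls1 d c eps)) fsq_D2 //.
by move=> n j hn hj; split; nia.
Qed.

Lemma cls2 d c eps m :
  fDn d (lambert c (fun n => 2 * n)%N (fun n => 4 * n)%N eps 1) m =
  D2 (fun n j => (n%:R * (odn j)%:R) ^+ d * (c n * eps ^+ j.-1)) (fun n j => 2 * n * odn j)%N m.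
Proof.
rewrite fDnE (lamX _ _ _ _ (fun n j => 2 * n * odn j)%N); try (move=> *; rewrite ?/odn; nia).
rewrite -fDnE fDn_D2; apply: D2_ext => // n j _ _; congr (_ ^+ _ * _).
by rewrite !natrM; field.
Qed.

Lemma cls3 d c eps m :
  fDn d (lambert c (fun n => 2 * odn n)%N (fun n => 2 * odn n)%N eps 1) m =
  D2 (fun n j => ((odn n)%:R * j%:R) ^+ d * (c n * eps ^+ j.-1)) (fun n j => 2 * odn n * j)%N m.
Proof.
rewrite fDnE (lamX _ _ _ _ (fun n j => 2 * odn n * j)%N); try (move=> *; rewrite ?/odn; nia).
rewrite -fDnE fDn_D2; apply: D2_ext => // n j _ _; congr (_ ^+ _ * _).
by rewrite !natrM; field.
Qed.

Lemma cls4 d c eps m :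
  fDn d (lambert c (fun n => odn n)%N (fun n => 2 * odn n)%N eps 1) m =
  D2 (fun n j => ((odn n)%:R * (odn j)%:R / 2) ^+ d * (c n * eps ^+ j.-1)) (fun n j => odn n * odn j)%N m.
Proof.
rewrite fDnE (lamX _ _ _ _ (fun n j => odn n * odn j)%N); try (move=> *; rewrite ?/odn; nia).
rewrite -fDnE fDn_D2; apply: D2_ext => // n j _ _; congr (_ ^+ _ * _).
by rewrite !natrM.
Qed.

Lemma id1 (s p : nat) (hs : (1 <= s)%N) :
  (forall m, ((2 * s).-1)`!%:R * serI (2 * s) (2 * p) m =
     \sum_(1 <= r < p.+1) tce s r * fsq (fDn (2 * r).-1 (serA (2 * p - 2 * r).+1)) m
   + \sum_(p.+1 <= r < s.+1) tce s r * fsq (fDn (2 * p) (serA (2 * r - 2 * p).-1)) m).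
Proof.
move=> m.
have E := lhs_even_split (fun n => n%:R ^+ (2 * p)) 1 (fun n => 2 * n)%N
  (fun n => 2 * n * (2 * s))%N (fun n => 4 * n)%N s m p.+1 hs isT
  (fun n => erefl) (fun n => ltac:(lia)) (fun n hn => ltac:(lia)).
rewrite expr1n mulr1 in E; rewrite /serI E.
congr (_ + _); apply: eq_big_nat => r /andP [h1 h2]; congr (_ * _); rewrite /serA cls1sq.
- apply: D2_ext => n J hn hJ; first nia.
  rewrite !expr1n !mulr1.
  set b := (2 * p - 2 * r).+1; set a := (2 * r).-1.
  rewrite (_ : (2 * p = a + b)%N); last by rewrite /a /b; lia.
  by rewrite exprD exprMn; ring.
- rewrite [RHS]D2_swap; apply: D2_ext => n J hn hJ; first nia.
  rewrite !expr1n !mulr1.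
  set b := (2 * r - 2 * p).-1; set a := (2 * p).
  rewrite (_ : ((2 * r).-1 = a + b)%N); last by rewrite /a /b; lia.
  by rewrite exprD exprMn; ring.
Qed.

Lemma id2 (s p : nat) (hs : (1 <= s)%N) :
  (forall m, (2 * s)`!%:R * serI (2 * s).+1 (2 * p).+1 m =
     \sum_(0 <= r < p.+1) 2 ^- (2 * r) * tco s r * fDn (2 * r) (serC (2 * p - 2 * r).+1) m
   + \sum_(p.+1 <= r < s.+1) 2 ^- (2 * r) * tco s r * fDn (2 * p).+1 (serF (2 * r - 2 * p).-1) m).
Proof.
move=> m.
have E := lhs_odd_split (fun n => n%:R ^+ (2 * p).+1) 1 (fun n => 2 * n)%N
  (fun n => 2 * n * (2 * s).+1)%N (fun n => 4 * n)%N s m p.+1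
  (fun n => erefl) (fun n => ltac:(lia)) (fun n hn => ltac:(lia)).
rewrite expr1n mulr1 in E; rewrite /serI E.
congr (_ + _); apply: eq_big_nat => r /andP [h1 h2]; rewrite -mulrA mulrCA; congr (_ * _).
- rewrite /serC cls2 D2_scale; apply: D2_ext => n J hn hJ //.
  rewrite !expr1n !mulr1 expr_div_n.
  set b := (2 * p - 2 * r).+1; set a := (2 * r).
  rewrite (_ : ((2 * p).+1 = a + b)%N); last by rewrite /a /b; lia.
  by rewrite exprD exprMn; ring.
- rewrite /serF cls3 D2_scale [RHS]D2_swap; apply: D2_ext => n J hn hJ; first nia.
  rewrite !expr1n !mulr1 expr_div_n.
  set b := (2 * r - 2 * p).-1; set a := (2 * p).+1.
  rewrite (_ : ((2 * r) = a + b)%N); last by rewrite /a /b; lia.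
  by rewrite exprD exprMn; ring.
Qed.

Lemma id3 (s p : nat) (hs : (1 <= s)%N) :
  (forall m, ((2 * s).-1)`!%:R * (-1) ^+ s.-1 * serII (2 * s) (2 * p) m =
     \sum_(1 <= r < p.+1) tce s r * fsq (fDn (2 * r).-1 (serL (2 * p - 2 * r).+1)) m
   + \sum_(p.+1 <= r < s.+1) tce s r * fsq (fDn (2 * p) (serB (2 * r - 2 * p).-1)) m).
Proof.
move=> m.
have E := lhs_even_split (fun n => n%:R ^+ (2 * p)) (-1) (fun n => 2 * n)%N
  (fun n => 2 * n * (2 * s))%N (fun n => 4 * n)%N s m p.+1 hs isT
  (fun n => erefl) (fun n => ltac:(lia)) (fun n hn => ltac:(lia)).
rewrite /serII E.
congr (_ + _); apply: eq_big_nat => r /andP [h1 h2]; congr (_ * _).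
- rewrite /serL cls1sq; apply: D2_ext => n J hn hJ; first nia.
  set b := ((2 * p - 2 * r).+1)%N; set a := ((2 * r).-1)%N.
  rewrite (_ : (2 * p = a + b)%N); last by rewrite /a /b; lia.
  by rewrite exprD exprMn; ring.
- rewrite /serB cls1sq [RHS]D2_swap; apply: D2_ext => n J hn hJ; first nia.
  rewrite /sgn ?expr1n ?mulr1.
  set b := ((2 * r - 2 * p).-1)%N; set a := ((2 * p))%N.
  rewrite (_ : ((2 * r).-1 = a + b)%N); last by rewrite /a /b; lia.
  by rewrite exprD exprMn; ring.
Qed.

Lemma id4 (s p : nat) (hs : (1 <= s)%N) :
  (forall m, (2 * s)`!%:R * (-1) ^+ s * serII (2 * s).+1 (2 * p) m =
     \sum_(0 <= r < p) 2 ^- (2 * r) * tco s r * fDn (2 * r) (serN (2 * p - 2 * r)) m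
   + \sum_(p <= r < s.+1) 2 ^- (2 * r) * tco s r * fDn (2 * p) (serG (2 * r - 2 * p)) m).
Proof.
move=> m.
have E := lhs_odd_split (fun n => n%:R ^+ (2 * p)) (-1) (fun n => 2 * n)%N
  (fun n => 2 * n * (2 * s).+1)%N (fun n => 4 * n)%N s m p
  (fun n => erefl) (fun n => ltac:(lia)) (fun n hn => ltac:(lia)).
rewrite /serII E.
congr (_ + _); apply: eq_big_nat => r /andP [h1 h2]; rewrite -mulrA mulrCA; congr (_ * _).
- rewrite /serN cls2 D2_scale; apply: D2_ext => n J hn hJ //.
  rewrite expr_div_n.
  set b := ((2 * p - 2 * r))%N; set a := ((2 * r))%N.
  rewrite (_ : ((2 * p) = a + b)%N); last by rewrite /a /b; lia.
  by rewrite exprD exprMn; ring.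
- rewrite /serG cls3 D2_scale [RHS]D2_swap; apply: D2_ext => n J hn hJ; first nia.
  rewrite /sgn ?expr1n ?mulr1 expr_div_n.
  set b := ((2 * r - 2 * p))%N; set a := ((2 * p))%N.
  rewrite (_ : ((2 * r) = a + b)%N); last by rewrite /a /b; lia.
  by rewrite exprD exprMn; ring.
Qed.

Lemma id5 (s p : nat) (hs : (1 <= s)%N) :
  (forall m, ((2 * s).-1)`!%:R * serIII (2 * s) (2 * p) m =
     \sum_(1 <= r < p.+1) tce s r * fDn (2 * r).-1 (serF (2 * p - 2 * r).+1) m
   + \sum_(p.+1 <= r < s.+1) tce s r * fDn (2 * p) (serC (2 * r - 2 * p).-1) m).
Proof.
move=> m.
have E := lhs_even_split (fun n => (odn n)%:R ^+ (2 * p)) 1 (fun n => odn n)%N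
  (fun n => odn n * (2 * s))%N (fun n => 2 * odn n)%N s m p.+1 hs isT
  (fun n => erefl) (fun n => ltac:(lia)) (fun n hn => ltac:(rewrite /odn; lia)).
rewrite expr1n mulr1 in E; rewrite /serIII E.
congr (_ + _); apply: eq_big_nat => r /andP [h1 h2]; congr (_ * _).
- rewrite /serF cls3; apply: D2_ext => n J hn hJ; first nia.
  rewrite ?expr1n ?mulr1.
  set b := ((2 * p - 2 * r).+1)%N; set a := ((2 * r).-1)%N.
  rewrite (_ : (2 * p = a + b)%N); last by rewrite /a /b; lia.
  by rewrite exprD exprMn; ring.
- rewrite /serC cls2 [RHS]D2_swap; apply: D2_ext => n J hn hJ; first nia.
  rewrite ?expr1n ?mulr1.
  set b := ((2 * r - 2 * p).-1)%N; set a := ((2 * p))%N.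
  rewrite (_ : ((2 * r).-1 = a + b)%N); last by rewrite /a /b; lia.
  by rewrite exprD exprMn; ring.
Qed.

Lemma id6 (s p : nat) (hs : (1 <= s)%N) :
  (forall m, (2 * s)`!%:R * serIII (2 * s).+1 (2 * p).+1 m =
     \sum_(0 <= r < p.+1) tco s r * fDn (2 * r) (serH (2 * p - 2 * r).+1) m
   + \sum_(p.+1 <= r < s.+1) 2 ^- (2 * r - 2 * p - 1) * tco s r * fDn (2 * p).+1 (serH (2 * r - 2 * p).-1) m).
Proof.
move=> m.
have E := lhs_odd_split (fun n => (odn n)%:R ^+ (2 * p).+1) 1 (fun n => odn n)%N
  (fun n => odn n * (2 * s).+1)%N (fun n => 2 * odn n)%N s m p.+1
  (fun n => erefl) (fun n => ltac:(lia)) (fun n hn => ltac:(rewrite /odn; lia)).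
rewrite expr1n mulr1 in E; rewrite /serIII E.
congr (_ + _); apply: eq_big_nat => r /andP [h1 h2].
- congr (_ * _); rewrite /serH cls4; apply: D2_ext => n J hn hJ //.
  rewrite ?expr1n ?mulr1 !expr_div_n.
  set b := ((2 * p - 2 * r).+1)%N; set a := ((2 * r))%N.
  rewrite (_ : ((2 * p).+1 = a + b)%N); last by rewrite /a /b; lia.
  by rewrite exprD exprMn; ring.
- rewrite -mulrA mulrCA; congr (_ * _).
  rewrite /serH cls4 D2_scale [RHS]D2_swap; apply: D2_ext => n J hn hJ; first nia.
  rewrite ?expr1n ?mulr1 !expr_div_n.
  set b2 := ((2 * r - 2 * p).-1)%N; set b1 := ((2 * r - 2 * p - 1))%N; set a := ((2 * p).+1)%N.
  rewrite (_ : b1 = b2); last by rewrite /b1 /b2; lia.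
  rewrite (_ : ((2 * r) = a + b2)%N); last by rewrite /a /b2; lia.
  by rewrite !exprD exprMn invfM; ring.
Qed.

Lemma id7 (s p : nat) (hs : (1 <= s)%N) :
  (forall m, ((2 * s).-1)`!%:R * (-1) ^+ s.-1 * serIV (2 * s) (2 * p) m =
     \sum_(1 <= r < p.+1) tce s r * fDn (2 * r).-1 (serQ (2 * p - 2 * r).+1) m
   + \sum_(p.+1 <= r < s.+1) tce s r * fDn (2 * p) (serD (2 * r - 2 * p).-1) m).
Proof.
move=> m.
have E := lhs_even_split (fun n => (odn n)%:R ^+ (2 * p)) (-1) (fun n => odn n)%N
  (fun n => odn n * (2 * s))%N (fun n => 2 * odn n)%N s m p.+1 hs isT
  (fun n => erefl) (fun n => ltac:(lia)) (fun n hn => ltac:(rewrite /odn; lia)).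
rewrite /serIV E.
congr (_ + _); apply: eq_big_nat => r /andP [h1 h2]; congr (_ * _).
- rewrite /serQ cls3; apply: D2_ext => n J hn hJ; first nia.
  set b := ((2 * p - 2 * r).+1)%N; set a := ((2 * r).-1)%N.
  rewrite (_ : (2 * p = a + b)%N); last by rewrite /a /b; lia.
  by rewrite exprD exprMn; ring.
- rewrite /serD cls2 [RHS]D2_swap; apply: D2_ext => n J hn hJ; first nia.
  rewrite /sgn ?expr1n ?mulr1.
  set b := ((2 * r - 2 * p).-1)%N; set a := ((2 * p))%N.
  rewrite (_ : ((2 * r).-1 = a + b)%N); last by rewrite /a /b; lia.
  by rewrite exprD exprMn; ring.
Qed.

Lemma id8 (s p : nat) (hs : (1 <= s)%N) :
  (forall m, (2 * s)`!%:R * (-1) ^+ s * serIV (2 * s).+1 (2 * p) m =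
     \sum_(0 <= r < p) tco s r * fDn (2 * r) (serT (2 * p - 2 * r)) m
   + \sum_(p <= r < s.+1) 2 ^- (2 * r - 2 * p) * tco s r * fDn (2 * p) (serJ (2 * r - 2 * p)) m).
Proof.
move=> m.
have E := lhs_odd_split (fun n => (odn n)%:R ^+ (2 * p)) (-1) (fun n => odn n)%N
  (fun n => odn n * (2 * s).+1)%N (fun n => 2 * odn n)%N s m p
  (fun n => erefl) (fun n => ltac:(lia)) (fun n hn => ltac:(rewrite /odn; lia)).
rewrite /serIV E.
congr (_ + _); apply: eq_big_nat => r /andP [h1 h2].
- congr (_ * _); rewrite /serT cls4; apply: D2_ext => n J hn hJ //.
  rewrite !expr_div_n.
  set b := ((2 * p - 2 * r))%N; set a := ((2 * r))%N.
  rewrite (_ : ((2 * p) = a + b)%N); last by rewrite /a /b; lia.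
  by rewrite exprD exprMn; ring.
- rewrite -mulrA mulrCA; congr (_ * _).
  rewrite /serJ cls4 D2_scale [RHS]D2_swap; apply: D2_ext => n J hn hJ; first nia.
  rewrite /sgn ?expr1n ?mulr1 !expr_div_n.
  set b := ((2 * r - 2 * p))%N; set a := ((2 * p))%N.
  rewrite (_ : ((2 * r) = a + b)%N); last by rewrite /a /b; lia.
  by rewrite !exprD exprMn invfM; ring.
Qed.

Lemma id9 (s p : nat) (hs : (1 <= s)%N) :
  (forall m, ((2 * s).-1)`!%:R * serV (2 * s) (2 * p) m =
     \sum_(1 <= r < p.+1) tce s r * fsq (fDn (2 * r).-1 (serB (2 * p - 2 * r).+1)) m
   + \sum_(p.+1 <= r < s.+1) tce s r * fsq (fDn (2 * p) (serL (2 * r - 2 * p).-1)) m).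
Proof.
move=> m.
have E := lhs_even_split (fun n => sgn n * n%:R ^+ (2 * p)) 1 (fun n => 2 * n)%N
  (fun n => 2 * n * (2 * s))%N (fun n => 4 * n)%N s m p.+1 hs isT
  (fun n => erefl) (fun n => ltac:(lia)) (fun n hn => ltac:(lia)).
rewrite expr1n mulr1 in E; rewrite /serV E.
congr (_ + _); apply: eq_big_nat => r /andP [h1 h2]; congr (_ * _).
- rewrite /serB cls1sq; apply: D2_ext => n J hn hJ; first nia.
  rewrite ?expr1n ?mulr1.
  set b := ((2 * p - 2 * r).+1)%N; set a := ((2 * r).-1)%N.
  rewrite (_ : (2 * p = a + b)%N); last by rewrite /a /b; lia.
  by rewrite exprD exprMn; ring.
- rewrite /serL cls1sq [RHS]D2_swap; apply: D2_ext => n J hn hJ; first nia.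
  rewrite /sgn ?expr1n ?mulr1.
  set b := ((2 * r - 2 * p).-1)%N; set a := ((2 * p))%N.
  rewrite (_ : ((2 * r).-1 = a + b)%N); last by rewrite /a /b; lia.
  by rewrite exprD exprMn; ring.
Qed.

Lemma id10 (s p : nat) (hs : (1 <= s)%N) :
  (forall m, (2 * s)`!%:R * serV (2 * s).+1 (2 * p).+1 m =
     \sum_(0 <= r < p.+1) 2 ^- (2 * r) * tco s r * fDn (2 * r) (serD (2 * p - 2 * r).+1) m
   + \sum_(p.+1 <= r < s.+1) 2 ^- (2 * r) * tco s r * fDn (2 * p).+1 (serQ (2 * r - 2 * p).-1) m).
Proof.
move=> m.
have E := lhs_odd_split (fun n => sgn n * n%:R ^+ (2 * p).+1) 1 (fun n => 2 * n)%N
  (fun n => 2 * n * (2 * s).+1)%N (fun n => 4 * n)%N s m p.+1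
  (fun n => erefl) (fun n => ltac:(lia)) (fun n hn => ltac:(lia)).
rewrite expr1n mulr1 in E; rewrite /serV E.
congr (_ + _); apply: eq_big_nat => r /andP [h1 h2]; rewrite -mulrA mulrCA; congr (_ * _).
- rewrite /serD cls2 D2_scale; apply: D2_ext => n J hn hJ //.
  rewrite ?expr1n ?mulr1 expr_div_n.
  set b := ((2 * p - 2 * r).+1)%N; set a := ((2 * r))%N.
  rewrite (_ : ((2 * p).+1 = a + b)%N); last by rewrite /a /b; lia.
  by rewrite exprD exprMn; ring.
- rewrite /serQ cls3 D2_scale [RHS]D2_swap; apply: D2_ext => n J hn hJ; first nia.
  rewrite /sgn ?expr1n ?mulr1 expr_div_n.
  set b := ((2 * r - 2 * p).-1)%N; set a := ((2 * p).+1)%N.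
  rewrite (_ : ((2 * r) = a + b)%N); last by rewrite /a /b; lia.
  by rewrite exprD exprMn; ring.
Qed.

Lemma id11 (s p : nat) (hs : (1 <= s)%N) :
  (forall m, ((2 * s).-1)`!%:R * (-1) ^+ s.-1 * serVI (2 * s) (2 * p) m =
     \sum_(1 <= r < p.+1) tce s r * fsq (fDn (2 * r).-1 (serM (2 * p - 2 * r).+1)) m
   + \sum_(p.+1 <= r < s.+1) tce s r * fsq (fDn (2 * p) (serM (2 * r - 2 * p).-1)) m).
Proof.
move=> m.
have E := lhs_even_split (fun n => sgn n * n%:R ^+ (2 * p)) (-1) (fun n => 2 * n)%N
  (fun n => 2 * n * (2 * s))%N (fun n => 4 * n)%N s m p.+1 hs isT
  (fun n => erefl) (fun n => ltac:(lia)) (fun n hn => ltac:(lia)).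
rewrite /serVI E.
congr (_ + _); apply: eq_big_nat => r /andP [h1 h2]; congr (_ * _).
- rewrite /serM cls1sq; apply: D2_ext => n J hn hJ; first nia.
  set b := ((2 * p - 2 * r).+1)%N; set a := ((2 * r).-1)%N.
  rewrite (_ : (2 * p = a + b)%N); last by rewrite /a /b; lia.
  by rewrite exprD exprMn; ring.
- rewrite /serM cls1sq [RHS]D2_swap; apply: D2_ext => n J hn hJ; first nia.
  rewrite /sgn.
  set b := ((2 * r - 2 * p).-1)%N; set a := ((2 * p))%N.
  rewrite (_ : ((2 * r).-1 = a + b)%N); last by rewrite /a /b; lia.
  by rewrite exprD exprMn; ring.
Qed.

Lemma id12 (s p : nat) (hs : (1 <= s)%N) :
  (forall m, (2 * s)`!%:R * (-1) ^+ s * serVI (2 * s).+1 (2 * p) m =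
     \sum_(0 <= r < p) 2 ^- (2 * r) * tco s r * fDn (2 * r) (serP (2 * p - 2 * r)) m
   + \sum_(p <= r < s.+1) 2 ^- (2 * r) * tco s r * fDn (2 * p) (serR (2 * r - 2 * p)) m).
Proof.
move=> m.
have E := lhs_odd_split (fun n => sgn n * n%:R ^+ (2 * p)) (-1) (fun n => 2 * n)%N
  (fun n => 2 * n * (2 * s).+1)%N (fun n => 4 * n)%N s m p
  (fun n => erefl) (fun n => ltac:(lia)) (fun n hn => ltac:(lia)).
rewrite /serVI E.
congr (_ + _); apply: eq_big_nat => r /andP [h1 h2]; rewrite -mulrA mulrCA; congr (_ * _).
- rewrite /serP cls2 D2_scale; apply: D2_ext => n J hn hJ //.
  rewrite expr_div_n.
  set b := ((2 * p - 2 * r))%N; set a := ((2 * r))%N.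
  rewrite (_ : ((2 * p) = a + b)%N); last by rewrite /a /b; lia.
  by rewrite exprD exprMn; ring.
- rewrite /serR cls3 D2_scale [RHS]D2_swap; apply: D2_ext => n J hn hJ; first nia.
  rewrite /sgn expr_div_n.
  set b := ((2 * r - 2 * p))%N; set a := ((2 * p))%N.
  rewrite (_ : ((2 * r) = a + b)%N); last by rewrite /a /b; lia.
  by rewrite exprD exprMn; ring.
Qed.

Lemma id13 (s p : nat) (hs : (1 <= s)%N) :
  (forall m, ((2 * s).-1)`!%:R * serVII (2 * s) (2 * p).+1 m =
     \sum_(1 <= r < p.+1) tce s r * fDn (2 * r).-1 (serG (2 * p - 2 * r).+2) m
   + \sum_(p.+1 <= r < s.+1) tce s r * fDn (2 * p).+1 (serN (2 * r - 2 * p).-2) m).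
Proof.
move=> m.
have E := lhs_even_split (fun n => sgn n * (odn n)%:R ^+ (2 * p).+1) 1 (fun n => odn n)%N
  (fun n => odn n * (2 * s))%N (fun n => 2 * odn n)%N s m p.+1 hs isT
  (fun n => erefl) (fun n => ltac:(lia)) (fun n hn => ltac:(rewrite /odn; lia)).
rewrite expr1n mulr1 in E; rewrite /serVII E.
congr (_ + _); apply: eq_big_nat => r /andP [h1 h2]; congr (_ * _).
- rewrite /serG cls3; apply: D2_ext => n J hn hJ; first nia.
  rewrite ?expr1n ?mulr1.
  set b := ((2 * p - 2 * r).+2)%N; set a := ((2 * r).-1)%N.
  rewrite (_ : ((2 * p).+1 = a + b)%N); last by rewrite /a /b; lia.
  by rewrite exprD exprMn; ring.
- rewrite /serN cls2 [RHS]D2_swap; apply: D2_ext => n J hn hJ; first nia.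
  rewrite /sgn ?expr1n ?mulr1.
  set b := ((2 * r - 2 * p).-2)%N; set a := ((2 * p).+1)%N.
  rewrite (_ : ((2 * r).-1 = a + b)%N); last by rewrite /a /b; lia.
  by rewrite exprD exprMn; ring.
Qed.

Lemma id14 (s p : nat) (hs : (1 <= s)%N) :
  (forall m, (2 * s)`!%:R * serVII (2 * s).+1 (2 * p) m =
     \sum_(0 <= r < p) tco s r * fDn (2 * r) (serJ (2 * p - 2 * r)) m
   + \sum_(p <= r < s.+1) 2 ^- (2 * r - 2 * p) * tco s r * fDn (2 * p) (serT (2 * r - 2 * p)) m).
Proof.
move=> m.
have E := lhs_odd_split (fun n => sgn n * (odn n)%:R ^+ (2 * p)) 1 (fun n => odn n)%N
  (fun n => odn n * (2 * s).+1)%N (fun n => 2 * odn n)%N s m p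
  (fun n => erefl) (fun n => ltac:(lia)) (fun n hn => ltac:(rewrite /odn; lia)).
rewrite expr1n mulr1 in E; rewrite /serVII E.
congr (_ + _); apply: eq_big_nat => r /andP [h1 h2].
- congr (_ * _); rewrite /serJ cls4; apply: D2_ext => n J hn hJ //.
  rewrite ?expr1n ?mulr1 !expr_div_n.
  set b := ((2 * p - 2 * r))%N; set a := ((2 * r))%N.
  rewrite (_ : ((2 * p) = a + b)%N); last by rewrite /a /b; lia.
  by rewrite exprD exprMn; ring.
- rewrite -mulrA mulrCA; congr (_ * _).
  rewrite /serT cls4 D2_scale [RHS]D2_swap; apply: D2_ext => n J hn hJ; first nia.
  rewrite /sgn ?expr1n ?mulr1 !expr_div_n.
  set b := ((2 * r - 2 * p))%N; set a := ((2 * p))%N.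
  rewrite (_ : ((2 * r) = a + b)%N); last by rewrite /a /b; lia.
  by rewrite !exprD exprMn invfM; ring.
Qed.

Lemma id15 (s p : nat) (hs : (1 <= s)%N) :
  (forall m, ((2 * s).-1)`!%:R * (-1) ^+ s.-1 * serVIII (2 * s) (2 * p).+1 m =
     \sum_(1 <= r < p.+1) tce s r * fDn (2 * r).-1 (serR (2 * p - 2 * r).+2) m
   + \sum_(p.+1 <= r < s.+1) tce s r * fDn (2 * p).+1 (serP (2 * r - 2 * p).-2) m).
Proof.
move=> m.
have E := lhs_even_split (fun n => sgn n * (odn n)%:R ^+ (2 * p).+1) (-1) (fun n => odn n)%N
  (fun n => odn n * (2 * s))%N (fun n => 2 * odn n)%N s m p.+1 hs isT
  (fun n => erefl) (fun n => ltac:(lia)) (fun n hn => ltac:(rewrite /odn; lia)).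
rewrite /serVIII E.
congr (_ + _); apply: eq_big_nat => r /andP [h1 h2]; congr (_ * _).
- rewrite /serR cls3; apply: D2_ext => n J hn hJ; first nia.
  set b := ((2 * p - 2 * r).+2)%N; set a := ((2 * r).-1)%N.
  rewrite (_ : ((2 * p).+1 = a + b)%N); last by rewrite /a /b; lia.
  by rewrite exprD exprMn; ring.
- rewrite /serP cls2 [RHS]D2_swap; apply: D2_ext => n J hn hJ; first nia.
  rewrite /sgn.
  set b := ((2 * r - 2 * p).-2)%N; set a := ((2 * p).+1)%N.
  rewrite (_ : ((2 * r).-1 = a + b)%N); last by rewrite /a /b; lia.
  by rewrite exprD exprMn; ring.
Qed.

Lemma id16 (s p : nat) (hs : (1 <= s)%N) :
  (forall m, (2 * s)`!%:R * (-1) ^+ s * serVIII (2 * s).+1 (2 * p).+1 m =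
     \sum_(0 <= r < p.+1) tco s r * fDn (2 * r) (serU (2 * p - 2 * r).+1) m
   + \sum_(p.+1 <= r < s.+1) 2 ^- (2 * r - 2 * p - 1) * tco s r * fDn (2 * p).+1 (serU (2 * r - 2 * p).-1) m).
Proof.
move=> m.
have E := lhs_odd_split (fun n => sgn n * (odn n)%:R ^+ (2 * p).+1) (-1) (fun n => odn n)%N
  (fun n => odn n * (2 * s).+1)%N (fun n => 2 * odn n)%N s m p.+1
  (fun n => erefl) (fun n => ltac:(lia)) (fun n hn => ltac:(rewrite /odn; lia)).
rewrite /serVIII E.
congr (_ + _); apply: eq_big_nat => r /andP [h1 h2].
- congr (_ * _); rewrite /serU cls4; apply: D2_ext => n J hn hJ //.
  rewrite !expr_div_n.
  set b := ((2 * p - 2 * r).+1)%N; set a := ((2 * r))%N.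
  rewrite (_ : ((2 * p).+1 = a + b)%N); last by rewrite /a /b; lia.
  by rewrite exprD exprMn; ring.
- rewrite -mulrA mulrCA; congr (_ * _).
  rewrite /serU cls4 D2_scale [RHS]D2_swap; apply: D2_ext => n J hn hJ; first nia.
  rewrite /sgn !expr_div_n.
  set b2 := ((2 * r - 2 * p).-1)%N; set b1 := ((2 * r - 2 * p - 1))%N; set a := ((2 * p).+1)%N.
  rewrite (_ : b1 = b2); last by rewrite /b1 /b2; lia.
  rewrite (_ : ((2 * r) = a + b2)%N); last by rewrite /a /b2; lia.
  by rewrite !exprD exprMn invfM; ring.
Qed.

Theorem theorem3p2 (s p : nat) (hs : (1 <= s)%N) :
  (* 1 *)
  (forall m, ((2 * s).-1)`!%:R * serI (2 * s) (2 * p) m =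
     \sum_(1 <= r < p.+1) tce s r * fsq (fDn (2 * r).-1 (serA (2 * p - 2 * r).+1)) m
   + \sum_(p.+1 <= r < s.+1) tce s r * fsq (fDn (2 * p) (serA (2 * r - 2 * p).-1)) m) /\
  (* 2 *)
  (forall m, (2 * s)`!%:R * serI (2 * s).+1 (2 * p).+1 m =
     \sum_(0 <= r < p.+1) 2 ^- (2 * r) * tco s r * fDn (2 * r) (serC (2 * p - 2 * r).+1) m
   + \sum_(p.+1 <= r < s.+1) 2 ^- (2 * r) * tco s r * fDn (2 * p).+1 (serF (2 * r - 2 * p).-1) m) /\
  (* 3 *)
  (forall m, ((2 * s).-1)`!%:R * (-1) ^+ s.-1 * serII (2 * s) (2 * p) m =
     \sum_(1 <= r < p.+1) tce s r * fsq (fDn (2 * r).-1 (serL (2 * p - 2 * r).+1)) m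
   + \sum_(p.+1 <= r < s.+1) tce s r * fsq (fDn (2 * p) (serB (2 * r - 2 * p).-1)) m) /\
  (* 4 *)
  (forall m, (2 * s)`!%:R * (-1) ^+ s * serII (2 * s).+1 (2 * p) m =
     \sum_(0 <= r < p) 2 ^- (2 * r) * tco s r * fDn (2 * r) (serN (2 * p - 2 * r)) m
   + \sum_(p <= r < s.+1) 2 ^- (2 * r) * tco s r * fDn (2 * p) (serG (2 * r - 2 * p)) m) /\
  (* 5 *)
  (forall m, ((2 * s).-1)`!%:R * serIII (2 * s) (2 * p) m =
     \sum_(1 <= r < p.+1) tce s r * fDn (2 * r).-1 (serF (2 * p - 2 * r).+1) m
   + \sum_(p.+1 <= r < s.+1) tce s r * fDn (2 * p) (serC (2 * r - 2 * p).-1) m) /\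
  (* 6 *)
  (forall m, (2 * s)`!%:R * serIII (2 * s).+1 (2 * p).+1 m =
     \sum_(0 <= r < p.+1) tco s r * fDn (2 * r) (serH (2 * p - 2 * r).+1) m
   + \sum_(p.+1 <= r < s.+1) 2 ^- (2 * r - 2 * p - 1) * tco s r * fDn (2 * p).+1 (serH (2 * r - 2 * p).-1) m) /\
  (* 7 *)
  (forall m, ((2 * s).-1)`!%:R * (-1) ^+ s.-1 * serIV (2 * s) (2 * p) m =
     \sum_(1 <= r < p.+1) tce s r * fDn (2 * r).-1 (serQ (2 * p - 2 * r).+1) m
   + \sum_(p.+1 <= r < s.+1) tce s r * fDn (2 * p) (serD (2 * r - 2 * p).-1) m) /\
  (* 8 *)
  (forall m, (2 * s)`!%:R * (-1) ^+ s * serIV (2 * s).+1 (2 * p) m =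
     \sum_(0 <= r < p) tco s r * fDn (2 * r) (serT (2 * p - 2 * r)) m
   + \sum_(p <= r < s.+1) 2 ^- (2 * r - 2 * p) * tco s r * fDn (2 * p) (serJ (2 * r - 2 * p)) m) /\
  (* 9 *)
  (forall m, ((2 * s).-1)`!%:R * serV (2 * s) (2 * p) m =
     \sum_(1 <= r < p.+1) tce s r * fsq (fDn (2 * r).-1 (serB (2 * p - 2 * r).+1)) m
   + \sum_(p.+1 <= r < s.+1) tce s r * fsq (fDn (2 * p) (serL (2 * r - 2 * p).-1)) m) /\
  (* 10 *)
  (forall m, (2 * s)`!%:R * serV (2 * s).+1 (2 * p).+1 m =
     \sum_(0 <= r < p.+1) 2 ^- (2 * r) * tco s r * fDn (2 * r) (serD (2 * p - 2 * r).+1) m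
   + \sum_(p.+1 <= r < s.+1) 2 ^- (2 * r) * tco s r * fDn (2 * p).+1 (serQ (2 * r - 2 * p).-1) m) /\
  (* 11 *)
  (forall m, ((2 * s).-1)`!%:R * (-1) ^+ s.-1 * serVI (2 * s) (2 * p) m =
     \sum_(1 <= r < p.+1) tce s r * fsq (fDn (2 * r).-1 (serM (2 * p - 2 * r).+1)) m
   + \sum_(p.+1 <= r < s.+1) tce s r * fsq (fDn (2 * p) (serM (2 * r - 2 * p).-1)) m) /\
  (* 12 *)
  (forall m, (2 * s)`!%:R * (-1) ^+ s * serVI (2 * s).+1 (2 * p) m =
     \sum_(0 <= r < p) 2 ^- (2 * r) * tco s r * fDn (2 * r) (serP (2 * p - 2 * r)) m
   + \sum_(p <= r < s.+1) 2 ^- (2 * r) * tco s r * fDn (2 * p) (serR (2 * r - 2 * p)) m) /\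
  (* 13 *)
  (forall m, ((2 * s).-1)`!%:R * serVII (2 * s) (2 * p).+1 m =
     \sum_(1 <= r < p.+1) tce s r * fDn (2 * r).-1 (serG (2 * p - 2 * r).+2) m
   + \sum_(p.+1 <= r < s.+1) tce s r * fDn (2 * p).+1 (serN (2 * r - 2 * p).-2) m) /\
  (* 14 *)
  (forall m, (2 * s)`!%:R * serVII (2 * s).+1 (2 * p) m =
     \sum_(0 <= r < p) tco s r * fDn (2 * r) (serJ (2 * p - 2 * r)) m
   + \sum_(p <= r < s.+1) 2 ^- (2 * r - 2 * p) * tco s r * fDn (2 * p) (serT (2 * r - 2 * p)) m) /\
  (* 15 *)
  (forall m, ((2 * s).-1)`!%:R * (-1) ^+ s.-1 * serVIII (2 * s) (2 * p).+1 m =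
     \sum_(1 <= r < p.+1) tce s r * fDn (2 * r).-1 (serR (2 * p - 2 * r).+2) m
   + \sum_(p.+1 <= r < s.+1) tce s r * fDn (2 * p).+1 (serP (2 * r - 2 * p).-2) m) /\
  (* 16 *)
  (forall m, (2 * s)`!%:R * (-1) ^+ s * serVIII (2 * s).+1 (2 * p).+1 m =
     \sum_(0 <= r < p.+1) tco s r * fDn (2 * r) (serU (2 * p - 2 * r).+1) m
   + \sum_(p.+1 <= r < s.+1) 2 ^- (2 * r - 2 * p - 1) * tco s r * fDn (2 * p).+1 (serU (2 * r - 2 * p).-1) m).
Proof.
split; first exact: id1.
split; first exact: id2.
split; first exact: id3.
split; first exact: id4.
split; first exact: id5.
split; first exact: id6.
split; first exact: id7.
split; first exact: id8.
split; first exact: id9.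
split; first exact: id10.
split; first exact: id11.
split; first exact: id12.
split; first exact: id13.
split; first exact: id14.
split; first exact: id15.
exact: id16.
Qed.
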